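(* Fix an integer $r\ge1$ and let $F(x,y)=x^{2r+1}+y^{2r+1}+\sum_{j=1}^r c(r,j)x^{2r+1-2j}y^j$, where $c(r,j)=\frac{2r+1}{j}\binom{2r-j}{j-1}$. Let $H(x,y)=\sum_{j=1}^r\lambda_jx^{2r+1-2j}y^j$ with $0\le\lambda_j<c(r,j)$ for each $j$, and put $G=F-H+FH$. Then $N(G)=N(F)+N(FH)$.
   Context: $N(q)$ denotes the number of distinct monomials with nonzero coefficient in the polynomial $q$. *)

(* Defs.v *)
From mathcomp Require Import all_boot all_order all_algebra.
From mathcomp Require Import mpoly.

Import Order.TTheory GRing.Theory Num.Theory.
Local Open Scope ring_scope.

(* Bivariate polynomials in x = 'X_0, y = 'X_1 over a real field R. *)

(* N(q): number of distinct monomials with nonzero coefficient in q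
   (msupp q is duplicate-free). *)
Definition Nmon {R : realFieldType} (q : {mpoly R[2]}) : nat := size (msupp q).

Definition cc (R : realFieldType) (r j : nat) : R :=
  (2 * r + 1)%:R / j%:R * ('C(2 * r - j, j - 1))%:R.

Definition xmon (R : realFieldType) (r j : nat) : {mpoly R[2]} :=
  'X_0 ^+ (2 * r + 1 - 2 * j) * 'X_1 ^+ j.

Definition Fpoly (R : realFieldType) (r : nat) : {mpoly R[2]} :=
  'X_0 ^+ (2 * r + 1) + 'X_1 ^+ (2 * r + 1)
  + \sum_(1 <= j < r.+1) cc R r j *: xmon R r j.

Definition Hpoly (R : realFieldType) (r : nat) (lam : nat -> R) : {mpoly R[2]} :=
  \sum_(1 <= j < r.+1) lam j *: xmon R r j.

(* Main.v *)
Require Import Defs.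
From mathcomp Require Import all_boot all_order all_algebra.
From mathcomp Require Import mpoly.
From mathcomp Require Import zify.
Import Order.TTheory GRing.Theory Num.Theory.
Local Open Scope ring_scope.

Definition mk (a b : nat) : 'X_{1..2} := (U_((0%R : 'I_2)) *+ a + U_((1%R : 'I_2)) *+ b)%MM.

Lemma mk0 a b : mk a b 0 = a.
Proof. rewrite mnmDE !mulmnE !mnm1E /=; lia. Qed.
Lemma mk1 a b : mk a b 1 = b.
Proof. rewrite mnmDE !mulmnE !mnm1E /=; lia. Qed.

Lemma mnm2P (m m' : 'X_{1..2}) : m 0 = m' 0 -> m 1 = m' 1 -> m = m'.
Proof.
move=> h0 h1; apply/mnmP => -[[|[|//]] Hi].
- by have -> : Ordinal Hi = 0 by apply/val_inj.
- by have -> : Ordinal Hi = 1 by apply/val_inj.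
Qed.

Lemma mkeq a b m : (mk a b == m) = (a == m 0) && (b == m 1).
Proof.
apply/eqP/andP => [<-|[/eqP h0 /eqP h1]].
  by split; apply/eqP; [exact: (esym (mk0 a b)) | exact: (esym (mk1 a b))].
by apply: mnm2P; [rewrite -h0 mk0 | rewrite -h1 mk1].
Qed.

Lemma xmonE (R : realFieldType) r j : xmon R r j = 'X_[mk (2 * r + 1 - 2 * j) j].
Proof. by rewrite /xmon !mpolyXn -mpolyXD. Qed.

Definition Sm (R : realFieldType) r (a : nat -> R) : {mpoly R[2]} :=
  \sum_(1 <= j < r.+1) a j *: 'X_[mk (2 * r + 1 - 2 * j) j].

Definition inS r (m : 'X_{1..2}) := ((1 <= m 1%R <= r) && (m 0%R == 2 * r + 1 - 2 * m 1%R))%N.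

Lemma Sm_coef (R : realFieldType) r (a : nat -> R) m :
  (Sm R r a)@_m = if inS r m then a (m 1) else 0.
Proof.
rewrite /Sm (big_morph (mcoeff m) (mcoeffD m) (mcoeff0 _ m)).
under eq_bigr do rewrite mcoeffZ mcoeffX mkeq.
case: ifP => [/andP[/andP[h1 h2] /eqP h0] | hn].
- rewrite (bigD1_seq (m 1)) /= ?mem_index_iota ?iota_uniq //; last by lia.
  rewrite h0 !eqxx mulr1 big1 ?addr0 // => j /negPf hj.
  by rewrite eq_sym hj andbF mulr0.
- rewrite big1_seq // => j /andP[_]; rewrite mem_index_iota => hj.
  case: eqP => [e0|_] /=; last by rewrite mulr0.
  case: eqP => [e1|_] /=; last by rewrite mulr0.
  move: hn; rewrite /inS -e0 -e1; lia.
Qed.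

Definition Pp (R : realFieldType) r (a : nat -> R) : {mpoly R[2]} :=
  'X_[mk (2 * r + 1) 0] + 'X_[mk 0 (2 * r + 1)] + Sm R r a.

Lemma Fpoly_P (R : realFieldType) r : Fpoly R r = Pp R r (cc R r).
Proof.
rewrite /Fpoly /Pp /Sm; congr (_ + _ + _).
- rewrite mpolyXn; congr 'X_[_]; apply: mnm2P; rewrite ?mk0 ?mk1 mulmnE mnm1E /=; lia.
- rewrite mpolyXn; congr 'X_[_]; apply: mnm2P; rewrite ?mk0 ?mk1 mulmnE mnm1E /=; lia.
- by apply: eq_bigr => j _; rewrite xmonE.
Qed.

Lemma Hpoly_S (R : realFieldType) r lam : Hpoly R r lam = Sm R r lam.
Proof. by rewrite /Hpoly /Sm; apply: eq_bigr => j _; rewrite xmonE. Qed.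

Lemma FH_P (R : realFieldType) r lam :
  Fpoly R r - Hpoly R r lam = Pp R r (fun j => cc R r j - lam j).
Proof.
rewrite Fpoly_P Hpoly_S /Pp -addrA; congr (_ + _).
by rewrite /Sm -sumrB; apply: eq_bigr => j _; rewrite scalerBl.
Qed.

Lemma Pp_coef (R : realFieldType) r (a : nat -> R) m :
  (Pp R r a)@_m = ((2 * r + 1 == m 0) && (0 == m 1))%:R
     + ((0 == m 0) && (2 * r + 1 == m 1))%:R + (if inS r m then a (m 1) else 0).
Proof. by rewrite /Pp !mcoeffD !mcoeffX Sm_coef !mkeq. Qed.

Definition inF r (m : 'X_{1..2}) :=
  [|| (m 0%R == 2 * r + 1) && (m 1%R == 0), (m 0%R == 0) && (m 1%R == 2 * r + 1) | inS r m]%N.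

Lemma natr_b0 (R : realFieldType) (b : bool) : ~~ b -> (b%:R : R) = 0.
Proof. by case: b. Qed.

Lemma Pp_supp (R : realFieldType) r (a : nat -> R) m :
  m \in msupp (Pp R r a) -> inF r m.
Proof.
rewrite -[m \in _]negbK -mcoeff_eq0 Pp_coef; apply: contraR => hn.
rewrite /inF /inS in hn.
rewrite !natr_b0; try lia.
rewrite /inS; case: ifP => h; first lia.
by rewrite !addr0.
Qed.

Lemma Sm_supp (R : realFieldType) r (a : nat -> R) m :
  m \in msupp (Sm R r a) -> inS r m.
Proof.
rewrite -[m \in _]negbK -mcoeff_eq0 Sm_coef; apply: contraR => hn.
by rewrite (negbTE hn).
Qed.

Lemma in_msupp (R : realFieldType) (p : {mpoly R[2]}) m : (m \in msupp p) = (p@_m != 0).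
Proof. by rewrite mcoeff_eq0 negbK. Qed.

Theorem proposition2p5 (R : realFieldType) (r : nat) (lam : nat -> R) :
  (1 <= r)%N ->
  (forall j : nat, (1 <= j <= r)%N -> 0 <= lam j /\ lam j < cc R r j) ->
  let F := Fpoly R r in
  let H := Hpoly R r lam in
  let G := F - H + F * H in
  Nmon G = (Nmon F + Nmon (F * H))%N.
Proof.
move=> hr hlam; cbv zeta.
set F := Fpoly R r; set H := Hpoly R r lam.
have eFH : F - H = Pp R r (fun j => cc R r j - lam j) by rewrite /F /H FH_P.
have suppeq : msupp F =i msupp (F - H).
  move=> m; rewrite !in_msupp. rewrite mcoeffB /F /H Fpoly_P Hpoly_S Pp_coef Sm_coef.
  case: ifP => hS; last by rewrite subr0.
  have hm : (1 <= m 1%R <= r)%N by move: hS; rewrite /inS; lia.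
  have [l0 lc] := hlam _ hm.
  rewrite !natr_b0; try lia.
  rewrite !add0r gt_eqF; last exact: le_lt_trans l0 lc.
  by rewrite gt_eqF // subr_gt0.
have D : forall m, m \in msupp (F * H) -> (F - H)@_m = 0.
  move=> m /msuppM_le /allpairsP [[m1 m2] /= [h1 h2 ->]].
  move: h1; rewrite /F Fpoly_P => /Pp_supp h1.
  move: h2; rewrite /H Hpoly_S => /Sm_supp h2.
  move: h1 h2; rewrite /inF /inS => h1 h2.
  rewrite mcoeffB /F /H ?Fpoly_P ?Hpoly_S Pp_coef Sm_coef !mnmDE !natr_b0; try lia.
  rewrite /inS !mnmDE; case: ifP => h; first lia.
  by rewrite !addr0 subr0.
have hG : msupp (F - H + F * H) =i msupp (F - H) ++ msupp (F * H).
  move=> m; rewrite mem_cat !in_msupp mcoeffD.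
  case: (eqVneq ((F * H)@_m) 0) => hm; first by rewrite hm addr0 orbF.
  by rewrite D ?add0r ?hm ?orbT // in_msupp hm.
have hu : uniq (msupp (F - H) ++ msupp (F * H)).
  rewrite cat_uniq !msupp_uniq andbT /=; apply/hasPn => m hm.
  by rewrite in_msupp D // eqxx.
rewrite /Nmon (perm_size (uniq_perm (msupp_uniq _) hu hG)) size_cat.
by rewrite (perm_size (uniq_perm (msupp_uniq _) (msupp_uniq _) suppeq)).
Qed.
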